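(* Let $r\ge2$ be an integer. Let $E$ be the set of $\psi\in C_p(\mathbb{R})$ for which there exist constants $m>0$ and $\alpha\ge0$ with $2mr>\alpha$ such that $m\,d(x)\le\psi(x)$ for all $x\in[0,1]$ and $\Delta_{n,k}(y;\psi)\le\alpha$ for all $n\in\mathbb{N}_0$, $k\in\{0,1,\dots,r^n-1\}$, $y\in(0,1)$. Then $E$ contains (1) the set $SC_0$ of all $\psi\in C_p(\mathbb{R})$ that are concave on $[0,1]$ and satisfy $\psi>0$ on $(0,1)$, and (2) the set $\mathcal{P}$.
   Context: $C_p(\mathbb{R})$ denotes the set of all continuous functions $f:\mathbb{R}\to\mathbb{R}$ periodic with period $1$ with $f(0)=0$; $\mathbb{N}_0=\mathbb{N}\cup\{0\}$. $d(x)=\min\{|x-z|:z\in\mathbb{Z}\}$. For $f\in C_p(\mathbb{R})$ and $(n,k,y)\in\mathbb{N}_0\times\mathbb{Z}\times(0,1)$: $\delta^+_{n,k}(y;f)=\dfrac{f(\frac{k+1}{r^n})-f(\frac{k+y}{r^n})}{\frac{1-y}{r^n}}$, $\delta^-_{n,k}(y;f)=\dfrac{f(\frac{k+y}{r^n})-f(\frac{k}{r^n})}{\frac{y}{r^n}}$, $\Delta_{n,k}(y;f)=2r^n(\delta^+_{n,k}(y;f)-\delta^-_{n,k}(y;f))$. For $c>0$, $\mathcal{P}_c$ is the set of $f\in C_p(\mathbb{R})$ with $\delta^+_{n,k}(y;f)-\delta^-_{n,k}(y;f)\le-c$ for all $(n,k,y)\in\mathbb{N}_0\times\mathbb{Z}\times(0,1)$,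 and $\mathcal{P}=\bigcup_{c>0}\mathcal{P}_c$. *)

(* Defs.v *)
From Stdlib Require Import Reals Lra Lia.
Open Scope R_scope.

Definition Cp (f : R -> R) : Prop :=
  continuity f /\ (forall x, f (x + 1) = f x) /\ f 0 = 0.

(* d(x) = min{|x-z| : z in Z}, i.e. distance to the nearest integer.
   With fl := up x - 1 = floor x, this is min(x - fl, fl + 1 - x). *)
Definition dist_Z (x : R) : R :=
  Rmin (x - IZR (up x - 1)) (IZR (up x) - x).

Definition delta_plus (r : nat) (n : nat) (k : R) (y : R) (f : R -> R) : R :=
  (f ((k + 1) / INR r ^ n) - f ((k + y) / INR r ^ n)) / ((1 - y) / INR r ^ n).

Definition delta_minus (r : nat) (n : nat) (k : R) (y : R) (f : R -> R) : R :=
  (f ((k + y) / INR r ^ n) - f (k / INR r ^ n)) / (y / INR r ^ n).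

Definition Delta (r : nat) (n : nat) (k : R) (y : R) (f : R -> R) : R :=
  2 * INR r ^ n * (delta_plus r n k y f - delta_minus r n k y f).

Definition in_Pc (r : nat) (c : R) (f : R -> R) : Prop :=
  Cp f /\ forall (n : nat) (k : Z) (y : R), 0 < y < 1 ->
    delta_plus r n (IZR k) y f - delta_minus r n (IZR k) y f <= - c.

Definition in_P (r : nat) (f : R -> R) : Prop :=
  exists c, 0 < c /\ in_Pc r c f.

Definition in_E (r : nat) (psi : R -> R) : Prop :=
  Cp psi /\
  exists m alpha : R, 0 < m /\ 0 <= alpha /\ alpha < 2 * m * INR r /\
    (forall x, 0 <= x <= 1 -> m * dist_Z x <= psi x) /\
    (forall (n k : nat) (y : R), (k < r ^ n)%nat -> 0 < y < 1 ->
       Delta r n (INR k) y psi <= alpha).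

Definition concave_on_01 (f : R -> R) : Prop :=
  forall x y t, 0 <= x <= 1 -> 0 <= y <= 1 -> 0 <= t <= 1 ->
    t * f x + (1 - t) * f y <= f (t * x + (1 - t) * y).

Definition in_SC0 (psi : R -> R) : Prop :=
  Cp psi /\ concave_on_01 psi /\ (forall x, 0 < x < 1 -> 0 < psi x).

(* Main.v *)
Require Import Defs.
From Stdlib Require Import Reals Lra Lia ZArith.
Open Scope R_scope.

Lemma dist_le_l x z : IZR z <= x -> dist_Z x <= x - IZR z.
Proof.
  intros Hz. unfold dist_Z. destruct (archimed x) as [H1 H2].
  assert (Hlt : (z < up x)%Z) by (apply lt_IZR; lra).
  assert (Hle : IZR z <= IZR (up x - 1)) by (apply IZR_le; lia).
  eapply Rle_trans; [apply Rmin_l|]. lra.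
Qed.

Lemma dist_le_r x z : x <= IZR z -> dist_Z x <= IZR z - x.
Proof.
  intros Hz. unfold dist_Z. destruct (archimed x) as [H1 H2].
  rewrite minus_IZR.
  destruct (Z_le_gt_dec (up x) z) as [Hc|Hc].
  - apply IZR_le in Hc. eapply Rle_trans; [apply Rmin_r|]. lra.
  - assert (Hle : IZR z <= IZR (up x - 1)) by (apply IZR_le; lia).
    rewrite minus_IZR in Hle.
    eapply Rle_trans; [apply Rmin_l|]. simpl in *. lra.
Qed.

Lemma dist_01 x : 0 <= x <= 1 -> dist_Z x <= x /\ dist_Z x <= 1 - x.
Proof.
  intros H. split.
  - pose proof (dist_le_l x 0). simpl in H0. lra.
  - pose proof (dist_le_r x 1). simpl in H0. lra.
Qed.

Lemma range_k (r n k : nat) : (k < r ^ n)%nat ->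
  0 <= INR k /\ INR k + 1 <= INR r ^ n.
Proof.
  intros H. split; [apply pos_INR|].
  rewrite <- pow_INR, <- S_INR. apply le_INR. lia.
Qed.

Lemma hpos (r n : nat) : (2 <= r)%nat -> 0 < INR r ^ n.
Proof.
  intros H. apply pow_lt. apply lt_0_INR. lia.
Qed.

Lemma Delta_eq r n k y f : 0 < y < 1 -> 0 < INR r ^ n ->
  delta_plus r n k y f - delta_minus r n k y f =
  INR r ^ n * (y * f ((k + 1) / INR r ^ n) + (1 - y) * f (k / INR r ^ n)
     - f ((k + y) / INR r ^ n)) / (y * (1 - y)).
Proof.
  intros Hy Hh. unfold delta_plus, delta_minus. field. repeat split; lra.
Qed.

Theorem proposition3p6 (r : nat) (hr : (2 <= r)%nat) :
  (forall psi : R -> R, in_SC0 psi -> in_E r psi) /\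
  (forall psi : R -> R, in_P r psi -> in_E r psi).
Proof.
  assert (Hr : 2 <= INR r) by (replace 2 with (INR 2) by (simpl; lra); apply le_INR; exact hr).
  split.
  - intros psi [HC [Hcv Hpos]]. split; [exact HC|].
    destruct HC as [_ [Hper H0]].
    assert (H1 : psi 1 = 0) by (rewrite <- H0; replace 1 with (0+1) by lra; apply Hper).
    assert (Hh : 0 < psi (1/2)) by (apply Hpos; lra).
    exists (2 * psi (1/2)), 0. repeat split; try lra.
    + nra.
    + intros x Hx. destruct (dist_01 x Hx) as [D1 D2].
      destruct (Rle_dec x (1/2)).
      * pose proof (Hcv (1/2) 0 (2*x) ltac:(lra) ltac:(lra) ltac:(lra)) as C.
        replace (2 * x * (1/2) + (1 - 2*x) * 0) with x in C by field.
        rewrite H0 in C. nra.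
      * pose proof (Hcv (1/2) 1 (2*(1-x)) ltac:(lra) ltac:(lra) ltac:(lra)) as C.
        replace (2 * (1-x) * (1/2) + (1 - 2*(1-x)) * 1) with x in C by field.
        rewrite H1 in C. nra.
    + intros n k y Hk Hy. pose proof (hpos r n hr) as Hh'.
      destruct (range_k r n k Hk) as [K1 K2].
      unfold Defs.Delta. rewrite (Delta_eq r n (INR k) y psi Hy Hh').
      set (h := INR r ^ n) in *.
      pose proof (Hcv (INR k / h) ((INR k + 1)/h) (1 - y)) as C.
      assert (E1 : 0 <= INR k / h <= 1).
      { split. unfold Rdiv; apply Rmult_le_pos; [lra| left; apply Rinv_0_lt_compat; lra].
        apply Rmult_le_reg_r with h; [lra|]. unfold Rdiv. rewrite Rmult_assoc, Rinv_l; lra. }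
      assert (E2 : 0 <= (INR k + 1) / h <= 1).
      { split. unfold Rdiv; apply Rmult_le_pos; [lra| left; apply Rinv_0_lt_compat; lra].
        apply Rmult_le_reg_r with h; [lra|]. unfold Rdiv. rewrite Rmult_assoc, Rinv_l; lra. }
      specialize (C E1 E2 ltac:(lra)).
      replace ((1 - y) * (INR k / h) + (1 - (1 - y)) * ((INR k + 1) / h))
        with ((INR k + y) / h) in C by (field; lra).
      assert (N : y * psi ((INR k + 1) / h) + (1 - y) * psi (INR k / h)
                  - psi ((INR k + y) / h) <= 0) by lra.
      assert (Q : 0 < y * (1 - y)) by nra.
      assert (0 <= 2 * h) by lra.
      set (X := y * psi ((INR k + 1) / h) + (1 - y) * psi (INR k / h)
                  - psi ((INR k + y) / h)) in *.
      assert (W : 0 <= h * (-X) * / (y*(1-y))).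
      { apply Rmult_le_pos; [nra| left; apply Rinv_0_lt_compat; lra]. }
      replace (2 * h * (h * X / (y * (1 - y)))) with (-(2*h*(h * (-X) * / (y*(1-y))))) by (field; lra).
      nra.
  - intros psi [c [Hc [HC HP]]]. split; [exact HC|].
    destruct HC as [_ [Hper H0]].
    assert (H1 : psi 1 = 0) by (rewrite <- H0; replace 1 with (0+1) by lra; apply Hper).
    assert (Hb : forall x, 0 < x < 1 -> c * (x * (1 - x)) <= psi x).
    { intros x Hx. pose proof (HP 0%nat 0%Z x Hx) as H.
      unfold delta_plus, delta_minus in H. simpl in H.
      replace ((0 + 1) / 1) with 1 in H by field.
      replace ((0 + x) / 1) with x in H by field.
      replace (0 / 1) with 0 in H by field.
      rewrite H0, H1 in H.
      assert (E : (0 - psi x) / ((1 - x) / 1) - (psi x - 0) / (x / 1)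
                 = - (psi x / (x * (1 - x)))) by (field; lra).
      rewrite E in H.
      assert (G : psi x = psi x / (x * (1 - x)) * (x * (1 - x))) by (field; lra).
      assert (0 < x * (1 - x)) by nra.
      rewrite G. apply Rmult_le_compat_r; lra. }
    exists (c / 2), 0. repeat split; try lra.
    + assert (0 < INR r) by lra. nra.
    + intros x Hx. destruct (dist_01 x Hx) as [D1 D2].
      destruct (Req_dec x 0) as [->|N0]; [rewrite H0; nra|].
      destruct (Req_dec x 1) as [->|N1]; [rewrite H1; nra|].
      specialize (Hb x ltac:(lra)).
      destruct (Rle_dec x (1/2)).
      * assert (c * x * (1 - x - 1/2) >= 0) by (apply Rle_ge; apply Rmult_le_pos; nra).
        assert (c / 2 * (x - dist_Z x) >= 0) by (apply Rle_ge; apply Rmult_le_pos; lra).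
        nra.
      * assert (c * (1 - x) * (x - 1/2) >= 0) by (apply Rle_ge; apply Rmult_le_pos; nra).
        assert (c / 2 * (1 - x - dist_Z x) >= 0) by (apply Rle_ge; apply Rmult_le_pos; lra).
        nra.
    + intros n k y Hk Hy. pose proof (hpos r n hr) as Hh'.
      pose proof (HP n (Z.of_nat k) y Hy) as H.
      rewrite <- INR_IZR_INZ in H.
      unfold Defs.Delta. nra.
Qed.
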